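(* For real parameters $p,r$, the Gini mean $G_{p,r}$ is stable if and only if $pr(p+r)=0$; i.e. the only stable Gini means are the power means $G_{0,r}=B_r$, $G_{p,0}=B_p$, $G_{p,-p}=B_0$.
   Context: For $s,t>0$: $G_{p,r}(s,t)=\big(\frac{s^p+t^p}{s^r+t^r}\big)^{1/(p-r)}$ if $p\ne r$; $\exp\big(\frac{s^p\log s+t^p\log t}{s^p+t^p}\big)$ if $p=r\ne0$; $\sqrt{st}$ if $p=r=0$. Power mean: $B_r(s,t)=\big(\frac{s^r+t^r}2\big)^{1/r}$ for $r\ne0$, $B_0(s,t)=\sqrt{st}$. A mean $M$ is stable if $M(s,t)=M\big(M(s,M(s,t)),M(M(s,t),t)\big)$ for all $s,t>0$. *)

(* Defs.v *)
From Stdlib Require Import Reals.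
Open Scope R_scope.

Definition Gini (p r : R) (s t : R) : R :=
  if Req_EM_T p r then
    (if Req_EM_T p 0 then sqrt (s * t)
     else exp ((Rpower s p * ln s + Rpower t p * ln t) / (Rpower s p + Rpower t p)))
  else Rpower ((Rpower s p + Rpower t p) / (Rpower s r + Rpower t r)) (1 / (p - r)).

Definition stable (M : R -> R -> R) : Prop :=
  forall s t : R, 0 < s -> 0 < t ->
    M s t = M (M s (M s t)) (M (M s t) t).

(* Main.v *)
Require Import Defs.
From Stdlib Require Import Reals Lra Psatz.
Open Scope R_scope.

Lemma ln_le' x y : 0 < x -> x <= y -> ln x <= ln y.
Proof. intros Hx Hxy. destruct (Rle_lt_or_eq_dec _ _ Hxy) as [H|H].
 - left; apply ln_increasing; auto.
 - subst; lra. Qed.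

Lemma ln_le_sub1 x : 0 < x -> ln x <= x - 1.
Proof. intros Hx. pose proof (exp_ineq1_le (ln x)). rewrite exp_ln in H; lra. Qed.

Lemma ln_divR x y : 0 < x -> 0 < y -> ln (x / y) = ln x - ln y.
Proof. intros. unfold Rdiv. rewrite ln_mult, ln_Rinv; try lra. apply Rinv_0_lt_compat; lra. Qed.

Lemma exp_up x : x <= 1/2 -> exp x <= 1 + x + 2 * x ^ 2.
Proof. intros Hx. pose proof (exp_ineq1_le (-x)). rewrite exp_Ropp in H.
 pose proof (exp_pos x).
 assert (Hp: 0 < 1 - x) by lra.
 assert (exp x * (1 - x) <= 1).
 { apply Rle_trans with (exp x * / exp x). apply Rmult_le_compat_l; lra.
   rewrite Rinv_r; lra. }
 assert (1 <= (1 + x + 2 * x ^ 2) * (1 - x)) by nra.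
 nra. Qed.

Definition Phi (p r v : R) : R :=
  if Req_EM_T p r then
    (if Req_EM_T p 0 then v / 2 else v * exp (p * v) / (1 + exp (p * v)))
  else (ln (1 + exp (p * v)) - ln (1 + exp (r * v))) / (p - r).

Definition Ident (f : R -> R) : Prop :=
  forall u, f u = f (f u) + f (f u + f (u - f u) - f (f u)).

Lemma Gexp p r a b : Gini p r (exp a) (exp b) = exp (a + Phi p r (b - a)).
Proof.
  unfold Gini, Phi. destruct (Req_EM_T p r) as [e|n].
  - destruct (Req_EM_T p 0) as [e0|n0].
    + rewrite <- exp_plus. replace (a + b) with ((a + (b - a) / 2) + (a + (b - a)/2)) by field.
      rewrite exp_plus. apply sqrt_square. left; apply exp_pos.
    + f_equal. unfold Rpower. rewrite !ln_exp. subst r.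
      replace (p * (b - a)) with (p * b + - (p * a)) by ring.
      rewrite exp_plus, exp_Ropp.
      pose proof (exp_pos (p*a)). pose proof (exp_pos (p*b)).
      field. split; try lra.
  - unfold Rpower. rewrite !ln_exp. f_equal.
    pose proof (exp_pos (p*a)). pose proof (exp_pos (p*b)).
    pose proof (exp_pos (r*a)). pose proof (exp_pos (r*b)).
    pose proof (exp_pos (p*(b-a))). pose proof (exp_pos (r*(b-a))).
    rewrite ln_divR by lra.
    replace (exp (p * a) + exp (p * b)) with (exp (p * a) * (1 + exp (p * (b - a)))).
    2:{ rewrite Rmult_plus_distr_l, <- exp_plus. f_equal; [ring|f_equal; ring]. }
    replace (exp (r * a) + exp (r * b)) with (exp (r * a) * (1 + exp (r * (b - a)))).
    2:{ rewrite Rmult_plus_distr_l, <- exp_plus. f_equal; [ring|f_equal; ring]. }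
    rewrite !ln_mult, !ln_exp by lra.
    field. lra.
Qed.

Lemma stable_iff p r : stable (Gini p r) <-> Ident (Phi p r).
Proof.
  split.
  - intros H u. specialize (H (exp 0) (exp u) (exp_pos _) (exp_pos _)).
    rewrite !Gexp in H. apply exp_inv in H.
    replace (u - 0) with u in H by ring. rewrite !Rplus_0_l in H.
    replace (Phi p r u - 0) with (Phi p r u) in H by ring.
    exact H.
  - intros H s t Hs Ht. rewrite <- (exp_ln s Hs), <- (exp_ln t Ht).
    rewrite !Gexp. f_equal.
    set (a := ln s). set (u := ln t - a).
    replace (ln t) with (a + u) by (unfold u; ring).
    replace (a + u - a) with u by ring.
    replace (a + Phi p r u - a) with (Phi p r u) by ring.
    replace (a + u - (a + Phi p r u)) with (u - Phi p r u) by ring.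
    replace (a + Phi p r u + Phi p r (u - Phi p r u) - (a + Phi p r (Phi p r u)))
      with (Phi p r u + Phi p r (u - Phi p r u) - Phi p r (Phi p r u)) by ring.
    rewrite (H u) at 1. ring.
Qed.

Lemma Ident_ext f g : (forall v, f v = g v) -> Ident g -> Ident f.
Proof. intros E H u. rewrite !E. apply H. Qed.

Lemma Ident_refl f : Ident f -> Ident (fun v => - f (- v)).
Proof. intros H u. cbv beta.
  replace (- (- f (- u))) with (f (-u)) by ring.
  replace (- (u - - f (- u))) with (-u - f (-u)) by ring.
  replace (- (- f (- u) + - f (-u - f (-u)) - - f (f (- u))))
    with (f (-u) + f (-u - f (-u)) - f (f (-u))) by ring.
  rewrite (H (-u)) at 1. ring.
Qed.

Lemma Phi_refl p r v : Phi (-p) (-r) v = - Phi p r (- v).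
Proof. unfold Phi.
  destruct (Req_EM_T (-p) (-r)); destruct (Req_EM_T p r); try lra.
  - destruct (Req_EM_T (-p) 0); destruct (Req_EM_T p 0); try lra.
    replace (-p*v) with (p * -v) by ring. field.
    pose proof (exp_pos (p * -v)). lra.
  - replace (-p*v) with (p * -v) by ring. replace (-r*v) with (r * -v) by ring.
    field. lra.
Qed.

Lemma Ident_lin : Ident (fun v => v / 2).
Proof. intros u. cbv beta. field. Qed.

Definition Pq (q v : R) := (ln (1 + exp (q * v)) - ln 2) / q.

Lemma EP q v : q <> 0 -> exp (q * Pq q v) = (1 + exp (q * v)) / 2.
Proof. intros Hq. unfold Pq.
  replace (q * ((ln (1 + exp (q * v)) - ln 2) / q)) with (ln (1 + exp (q * v)) + - ln 2) by (field; auto).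
  rewrite exp_plus, exp_Ropp, !exp_ln. field.
  lra. pose proof (exp_pos (q*v)); lra. Qed.

Lemma Ident_Pq q : q <> 0 -> Ident (Pq q).
Proof. intros Hq u. apply (Rmult_eq_reg_l q); auto. apply exp_inv.
  rewrite Rmult_plus_distr_l, exp_plus.
  set (m := Pq q u).
  replace (q * Pq q (m + Pq q (u - m) - Pq q m)) with (q * Pq q (m + Pq q (u - m) - Pq q m)) by reflexivity.
  rewrite !EP by auto.
  replace (q * (m + Pq q (u - m) - Pq q m)) with (q*m + q * Pq q (u-m) + - (q * Pq q m)) by ring.
  rewrite !exp_plus, exp_Ropp, !EP by auto.
  replace (q * (u - m)) with (q * u + - (q * m)) by ring.
  rewrite exp_plus, exp_Ropp. unfold m. rewrite EP by auto.
  pose proof (exp_pos (q * u)).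
  field. lra.
Qed.

Lemma if_dir p r : p * r * (p + r) = 0 -> Ident (Phi p r).
Proof. intros H.
  destruct (Req_EM_T p 0) as [Hp|Hp]; [| destruct (Req_EM_T r 0) as [Hr|Hr]].
  - subst p. destruct (Req_EM_T r 0) as [Hr|Hr].
    + subst r. apply Ident_ext with (fun v => v/2); [|apply Ident_lin].
      intro v. unfold Phi. destruct (Req_EM_T 0 0); try lra.
    + apply Ident_ext with (Pq r); [|apply Ident_Pq; auto].
      intro v. unfold Phi, Pq. destruct (Req_EM_T 0 r); try lra.
      rewrite Rmult_0_l, exp_0. replace (1+1) with 2 by ring. field. auto.
  - subst r. apply Ident_ext with (Pq p); [|apply Ident_Pq; auto].
    intro v. unfold Phi, Pq. destruct (Req_EM_T p 0); try lra.
    rewrite Rmult_0_l, exp_0. replace (1+1) with 2 by ring. field. auto.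
  - assert (Hs : p + r = 0).
    { destruct (Rmult_integral _ _ H) as [H1|H1]; auto.
      destruct (Rmult_integral _ _ H1); contradiction. }
    apply Ident_ext with (fun v => v/2); [|apply Ident_lin].
    intro v. unfold Phi. destruct (Req_EM_T p r); try lra.
    replace r with (-p) by lra.
    replace (1 + exp (p * v)) with (exp (p * v) * (1 + exp (- p * v))).
    2:{ rewrite Rmult_plus_distr_l, Rmult_1_r, <- exp_plus. replace (p*v + -p*v) with 0 by ring. rewrite exp_0. ring. }
    rewrite ln_mult, ln_exp. field. lra.
    apply exp_pos. pose proof (exp_pos (-p*v)); lra.
Qed.

Lemma absb x b : Rabs x <= b -> -b <= x <= b.
Proof. unfold Rabs; destruct (Rcase_abs x); lra. Qed.

Lemma bnd k e D : -1 <= k <= 1 -> -D <= e <= D -> -D <= k * e <= D.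
Proof. intros. split; nra. Qed.

Lemma caseA_abs (f : R -> R) al D : 0 < al < 1 -> al <> 1/2 -> 0 <= D ->
  (forall v, 0 <= v -> -D <= f v - al * v <= D) -> Ident f -> False.
Proof.
  intros Ha Ha2 HD Hb HI.
  set (s := 1 - 2 * al).
  assert (Hs : s <> 0) by (unfold s; lra).
  set (c := al * (1 - al) * Rabs s).
  assert (Hsa : 0 < Rabs s) by (apply Rabs_pos_lt; auto).
  assert (Hs1 : Rabs s < 1) by (unfold s; apply Rabs_def1; lra).
  assert (Hc : 0 < c) by (unfold c; apply Rmult_lt_0_compat; [nra|lra]).
  set (u := (6 * D + 1) / c).
  assert (Hcu : c * u = 6 * D + 1) by (unfold u; field; lra).
  assert (Hu : 0 <= u) by (unfold u; apply Rmult_le_pos; [lra| left; apply Rinv_0_lt_compat; lra]).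
  assert (Hau : al * (1 - al) * u >= 6 * D + 1).
  { rewrite <- Hcu. unfold c. assert (al*(1-al)*Rabs s <= al*(1-al)).
    { rewrite <- (Rmult_1_r (al*(1-al))) at 2. apply Rmult_le_compat_l; [nra|lra]. }
    apply Rle_ge, Rmult_le_compat_r; lra. }
  set (m := f u). set (e1 := m - al * u).
  assert (H1 := Hb u Hu). fold m in H1. fold e1 in H1.
  assert (Hm : 0 <= m) by (unfold e1 in H1; nra).
  assert (Hum : 0 <= u - m) by (unfold e1 in H1; nra).
  set (e2 := f m - al * m). assert (H2 := Hb m Hm). fold e2 in H2.
  set (e3 := f (u - m) - al * (u - m)). assert (H3 := Hb _ Hum). fold e3 in H3.
  set (w := m + f (u - m) - f m).
  assert (Hwd : w = m + f (u - m) - f m) by reflexivity.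
  assert (Hw : w = 2 * al * (1 - al) * u + s * e1 + e3 - e2).
  { unfold w, e1, e2, e3, s in *. ring. }
  assert (Hse1 := bnd s e1 D ltac:(apply absb; lra) H1).
  assert (Hw0 : 0 <= w) by lra.
  set (e4 := f w - al * w). assert (H4 := Hb _ Hw0). fold e4 in H4.
  assert (Hid := HI u). fold m in Hid. fold w in Hid.
  assert (Key : al * (1 - al) * s * u = al * s * e1 + al * e3 - al * e2 + e2 + e4 - (1 - al) * e1).
  { unfold e1, e2, e3, e4, s in *. rewrite Hw in *. nra. }
  assert (B1 := bnd (al * s) e1 D ltac:(apply absb; rewrite Rabs_mult, (Rabs_right al) by lra; nra) H1).
  assert (B2 := bnd al e3 D ltac:(lra) H3).
  assert (B3 := bnd (1 - al) e2 D ltac:(lra) H2).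
  assert (B4 := bnd (1 - al) e1 D ltac:(lra) H1).
  destruct (Rle_lt_dec 0 s) as [Hp|Hn].
  - unfold c in Hcu. rewrite Rabs_right in Hcu by lra. nra.
  - unfold c in Hcu. rewrite Rabs_left in Hcu by lra. nra.
Qed.

Lemma caseB_abs (f : R -> R) K d : 0 < K -> 0 < d ->
  (forall v, Rabs v <= d -> Rabs (f v - v / 2) <= K * v ^ 2) ->
  (forall eta, 0 < eta -> exists u, 0 < f u <= eta /\ Rabs (f (u - f u) - f u) <= f u / 8) ->
  Ident f -> False.
Proof.
  intros HK Hd Hl Ht HI.
  set (eta := Rmin (d / 2) (1 / (80 * K))).
  assert (He : 0 < eta) by (unfold eta; apply Rmin_pos; [lra| apply Rdiv_lt_0_compat; lra]).
  destruct (Ht eta He) as [u [[Hm0 Hm1] Hlip]].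
  set (m := f u) in *.
  assert (Hmd : m <= d / 2) by (apply Rle_trans with eta; [lra| apply Rmin_l]).
  assert (HmK : K * m <= 1 / 80).
  { assert (m <= 1 / (80 * K)) by (apply Rle_trans with eta; [lra| apply Rmin_r]).
    apply Rmult_le_compat_l with (r := K) in H; [|lra].
    replace (K * (1 / (80 * K))) with (1/80) in H by (field; lra). lra. }
  assert (HKm2 : K * m ^ 2 <= m / 80) by nra.
  assert (H1 := Hl m ltac:(rewrite Rabs_right; lra)). apply absb in H1.
  apply absb in Hlip.
  set (w := m + f (u - m) - f m).
  assert (Hwd : w = m + f (u - m) - f m) by reflexivity.
  assert (Hw : m <= w <= 2 * m) by (unfold w; lra).
  assert (H3 := Hl w ltac:(rewrite Rabs_right; lra)). apply absb in H3.
  assert (HKw : K * w ^ 2 <= 4 * (m / 80)).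
  { assert (w ^ 2 <= 4 * m ^ 2) by nra. nra. }
  assert (Hid := HI u). fold m in Hid. fold w in Hid.
  lra.
Qed.

Lemma exp_le1 x : x <= 0 -> exp x <= 1.
Proof. intros H. destruct (Rle_lt_or_eq_dec _ _ H) as [h|h].
 - rewrite <- exp_0. left; apply exp_increasing; auto.
 - subst; rewrite exp_0; lra. Qed.

Lemma exp_ge1 x : 0 <= x -> 1 <= exp x.
Proof. intros. pose proof (exp_ineq1_le x). lra. Qed.

Lemma LC x : Rabs x <= 1 -> 0 <= ln (1 + exp x) - ln 2 - x / 2 <= x ^ 2 / 2.
Proof. intros Hx. apply absb in Hx.
  set (y := x / 2). set (c := (exp y + exp (-y)) / 2).
  assert (E1 : 1 + exp x = 2 * (c * exp y)).
  { unfold c. replace x with (y + y) by (unfold y; field). rewrite exp_plus.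
    assert (h : exp (-y) * exp y = 1).
    { rewrite <- exp_plus. replace (-y + y) with 0 by ring. rewrite exp_0; auto. }
    replace (2 * ((exp y + exp (- y)) / 2 * exp y)) with (exp y * exp y + exp (-y) * exp y) by field.
    rewrite h. ring. }
  assert (Hc1 : 1 <= c).
  { unfold c. pose proof (exp_ineq1_le y). pose proof (exp_ineq1_le (-y)). lra. }
  assert (Hc2 : c <= 1 + x ^ 2 / 2).
  { unfold c. pose proof (exp_up y ltac:(unfold y; lra)). pose proof (exp_up (-y) ltac:(unfold y; lra)).
    unfold y in *. nra. }
  rewrite E1, !ln_mult, ln_exp; try lra; try apply exp_pos.
  2:{ pose proof (exp_pos y); nra. }
  pose proof (ln_le_sub1 c ltac:(lra)).
  pose proof (ln_le' 1 c ltac:(lra) Hc1). rewrite ln_1 in H0.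
  unfold y. lra.
Qed.

Lemma exp_near1 z : Rabs z <= 1/2 -> Rabs (exp z - 1) <= 2 * Rabs z.
Proof. intros Hz. pose proof (absb _ _ Hz).
  pose proof (exp_ineq1_le z). pose proof (exp_up z ltac:(lra)).
  apply Rabs_le. revert H Hz. unfold Rabs. destruct (Rcase_abs z); intros; split; nra.
Qed.

Lemma EB q u : q < 0 -> 0 < u -> - q * exp (q * u) <= 1 / u.
Proof. intros Hq Hu. pose proof (exp_ineq1_le (- (q * u))). rewrite exp_Ropp in H.
  pose proof (exp_pos (q*u)).
  assert (-q*u <= / exp (q*u)) by nra.
  apply Rmult_le_compat_r with (r := exp (q*u)) in H1; [|lra].
  rewrite Rinv_l in H1 by lra.
  apply Rmult_le_reg_l with u; auto. replace (u * (1/u)) with 1 by (field; lra).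
  replace (u * (-q*exp(q*u))) with (-q*u*exp(q*u)) by ring. lra.
Qed.

Lemma EB2 q u : q < 0 -> 0 < u -> (q * u) ^ 2 * exp (q * u) <= 4.
Proof. intros Hq Hu. set (x := - (q * u)).
  assert (Ex : exp x = exp (x / 2) * exp (x / 2)) by (rewrite <- exp_plus; f_equal; field).
  pose proof (exp_ineq1_le (x/2)).
  assert (Hx0 : 0 <= x) by (unfold x; nra).
  assert (h2: (1 + x/2)*(1+x/2) <= exp(x/2)*exp(x/2)) by (apply Rmult_le_compat; lra).
  assert (x ^ 2 / 4 <= exp x) by (rewrite Ex; nra).
  replace (exp (q * u)) with (/ exp x) by (unfold x; rewrite exp_Ropp, Rinv_inv; auto).
  pose proof (exp_pos x).
  replace ((q*u)^2) with (x^2) by (unfold x; ring).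
  apply Rmult_le_reg_r with (exp x); auto. rewrite Rmult_assoc, Rinv_l by lra. nra.
Qed.

Lemma Phi_ne p r v : p <> r ->
  Phi p r v = (ln (1 + exp (p * v)) - ln (1 + exp (r * v))) / (p - r).
Proof. intros. unfold Phi. destruct (Req_EM_T p r); [contradiction|auto]. Qed.

Lemma Phi_eq p v : p <> 0 -> Phi p p v = v * exp (p * v) / (1 + exp (p * v)).
Proof. intros. unfold Phi. destruct (Req_EM_T p p); [|lra].
  destruct (Req_EM_T p 0); [contradiction|auto]. Qed.

Lemma ln1e_bounds x : 0 <= ln (1 + exp x) <= exp x.
Proof. pose proof (exp_pos x). split.
  - rewrite <- ln_1. apply ln_le'; lra.
  - pose proof (ln_le_sub1 (1 + exp x) ltac:(lra)). lra. Qed.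

Lemma caseA p r : 0 < p -> r < 0 -> p + r <> 0 -> Ident (Phi p r) -> False.
Proof.
  intros Hp Hr Hs HI.
  assert (Hpr : p <> r) by lra.
  pose proof ln_lt_2 as Hl2.
  apply (caseA_abs (Phi p r) (p / (p - r)) (ln 2 / (p - r))); auto.
  - split. apply Rdiv_lt_0_compat; lra.
    apply Rmult_lt_reg_r with (p - r); [lra|]. unfold Rdiv; rewrite Rmult_assoc, Rinv_l; lra.
  - intro E. apply Hs. assert (p = 1/2 * (p - r)).
    { rewrite <- E. field. lra. } lra.
  - left. apply Rdiv_lt_0_compat; lra.
  - intros v Hv. rewrite Phi_ne by auto.
    assert (A1 : p * v <= ln (1 + exp (p * v))).
    { rewrite <- (ln_exp (p*v)) at 1. apply ln_le'. apply exp_pos. lra. }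
    assert (A2 : ln (1 + exp (p * v)) <= ln 2 + p * v).
    { rewrite <- (ln_exp (p*v)) at 2. rewrite <- ln_mult by (try lra; apply exp_pos).
      apply ln_le'. pose proof (exp_pos (p*v)); lra.
      pose proof (exp_ge1 (p*v) ltac:(nra)). lra. }
    assert (A3 : 0 <= ln (1 + exp (r * v))) by apply ln1e_bounds.
    assert (A4 : ln (1 + exp (r * v)) <= ln 2).
    { apply ln_le'. pose proof (exp_pos (r*v)); lra.
      pose proof (exp_le1 (r*v) ltac:(nra)). lra. }
    replace ((ln (1 + exp (p * v)) - ln (1 + exp (r * v))) / (p - r) - p / (p - r) * v)
      with ((ln (1 + exp (p * v)) - ln (1 + exp (r * v)) - p * v) / (p - r)) by (field; lra).
    split.
    + apply Rmult_le_reg_r with (p - r); [lra|].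
      replace (- (ln 2 / (p - r)) * (p - r)) with (- ln 2) by (field; lra).
      replace ((ln (1 + exp (p * v)) - ln (1 + exp (r * v)) - p * v) / (p - r) * (p - r))
        with (ln (1 + exp (p * v)) - ln (1 + exp (r * v)) - p * v) by (field; lra). lra.
    + apply Rmult_le_reg_r with (p - r); [lra|].
      replace (ln 2 / (p - r) * (p - r)) with (ln 2) by (field; lra).
      replace ((ln (1 + exp (p * v)) - ln (1 + exp (r * v)) - p * v) / (p - r) * (p - r))
        with (ln (1 + exp (p * v)) - ln (1 + exp (r * v)) - p * v) by (field; lra). lra.
Qed.

Lemma absdiv a b c : b <> 0 -> Rabs a <= c * Rabs b -> Rabs (a / b) <= c.
Proof. intros Hb H. pose proof (Rabs_pos_lt b Hb). unfold Rdiv. rewrite Rabs_mult, Rabs_inv.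
  apply Rmult_le_reg_r with (Rabs b); auto. rewrite Rmult_assoc, Rinv_l; lra. Qed.

Lemma small_prod q v d : Rabs v <= d -> Rabs q * d <= 1 -> Rabs (q * v) <= 1.
Proof. intros. rewrite Rabs_mult. pose proof (Rabs_pos q). pose proof (Rabs_pos v). nra. Qed.

Lemma locNE p r : p <> r -> forall v, Rabs v <= 1 / (Rabs p + Rabs r + 1) ->
  Rabs (Phi p r v - v / 2) <= ((p^2 + r^2) / (2 * Rabs (p - r)) + 1) * v ^ 2.
Proof. intros Hpr v Hv.
  pose proof (Rabs_pos p). pose proof (Rabs_pos r).
  assert (Hd : 0 < Rabs p + Rabs r + 1) by lra.
  assert (Hp1 : Rabs p * (1 / (Rabs p + Rabs r + 1)) <= 1).
  { apply Rmult_le_reg_r with (Rabs p + Rabs r + 1); auto. 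
    replace (Rabs p * (1 / (Rabs p + Rabs r + 1)) * (Rabs p + Rabs r + 1)) with (Rabs p) by (field; lra). lra. }
  assert (Hr1 : Rabs r * (1 / (Rabs p + Rabs r + 1)) <= 1).
  { apply Rmult_le_reg_r with (Rabs p + Rabs r + 1); auto. 
    replace (Rabs r * (1 / (Rabs p + Rabs r + 1)) * (Rabs p + Rabs r + 1)) with (Rabs r) by (field; lra). lra. }
  pose proof (LC (p * v) (small_prod _ _ _ Hv Hp1)) as Cp.
  pose proof (LC (r * v) (small_prod _ _ _ Hv Hr1)) as Cr.
  rewrite Phi_ne by auto.
  assert (Hq : p - r <> 0) by lra.
  pose proof (Rabs_pos_lt _ Hq).
  replace ((ln (1 + exp (p * v)) - ln (1 + exp (r * v))) / (p - r) - v / 2)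
    with (((ln (1 + exp (p * v)) - ln 2 - p * v / 2) - (ln (1 + exp (r * v)) - ln 2 - r * v / 2)) / (p - r))
    by (field; auto).
  apply absdiv; auto.
  apply Rabs_le.
  assert (((p ^ 2 + r ^ 2) / (2 * Rabs (p - r)) + 1) * v ^ 2 * Rabs (p - r) >= (p*v)^2/2 + (r*v)^2/2).
  { replace (((p ^ 2 + r ^ 2) / (2 * Rabs (p - r)) + 1) * v ^ 2 * Rabs (p - r))
      with ((p*v)^2/2 + (r*v)^2/2 + v^2 * Rabs (p - r)) by (field; lra). nra. }
  nra.
Qed.

Lemma locEQ p : p <> 0 -> forall v, Rabs v <= 1 / (2 * Rabs p) ->
  Rabs (Phi p p v - v / 2) <= Rabs p * v ^ 2.
Proof. intros Hp v Hv. rewrite Phi_eq by auto.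
  pose proof (Rabs_pos_lt _ Hp).
  assert (Hz : Rabs (p * v) <= 1/2).
  { rewrite Rabs_mult. apply Rmult_le_compat_l with (r := Rabs p) in Hv; [|lra].
    replace (Rabs p * (1 / (2 * Rabs p))) with (1/2) in Hv by (field; lra). lra. }
  pose proof (exp_near1 _ Hz).
  pose proof (exp_pos (p * v)).
  replace (v * exp (p * v) / (1 + exp (p * v)) - v / 2)
    with (v * (exp (p * v) - 1) / (2 * (1 + exp (p * v)))) by (field; lra).
  apply absdiv. lra.
  rewrite Rabs_mult. rewrite (Rabs_right (2 * _)) by lra. rewrite Rabs_mult in H0.
  pose proof (Rabs_pos v). pose proof (Rabs_pos (exp (p * v) - 1)).
  assert (Rabs v * Rabs (exp (p * v) - 1) <= Rabs v * (2 * (Rabs p * Rabs v))) by (apply Rmult_le_compat_l; lra).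
  assert (v ^ 2 = Rabs v * Rabs v) by (rewrite <- Rabs_mult; rewrite Rabs_right; [ring| nra]).
  assert (0 <= Rabs p * v ^ 2 * exp (p * v)) by (apply Rmult_le_pos; [apply Rmult_le_pos; nra|lra]).
  rewrite H5 in *.
  replace (Rabs p * (Rabs v * Rabs v) * (2 * (1 + exp (p * v)))) with
    (Rabs v * (2 * (Rabs p * Rabs v)) + 2 * (Rabs p * (Rabs v * Rabs v) * exp (p * v))) by ring.
  lra.
Qed.

Lemma Npos p r u : p <> r -> 0 < u -> 0 < Phi p r u.
Proof. intros Hpr Hu. rewrite Phi_ne by auto.
  destruct (Rlt_or_le r p) as [H|H].
  - apply Rdiv_lt_0_compat; [|lra].
    assert (ln (1 + exp (r * u)) < ln (1 + exp (p * u))); [|lra].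
    apply ln_increasing. pose proof (exp_pos (r*u)); lra.
    assert (exp (r*u) < exp (p*u)) by (apply exp_increasing; nra). lra.
  - assert (r > p) by lra.
    replace ((ln (1 + exp (p * u)) - ln (1 + exp (r * u))) / (p - r))
      with ((ln (1 + exp (r * u)) - ln (1 + exp (p * u))) / (r - p)) by (field; lra).
    apply Rdiv_lt_0_compat; [|lra].
    assert (ln (1 + exp (p * u)) < ln (1 + exp (r * u))); [|lra].
    apply ln_increasing. pose proof (exp_pos (p*u)); lra.
    assert (exp (p*u) < exp (r*u)) by (apply exp_increasing; nra). lra.
Qed.

Lemma Nup p r u : p <> r -> Phi p r u * Rabs (p - r) <= exp (p * u) + exp (r * u).
Proof. intros Hpr. rewrite Phi_ne by auto.
  assert (Hq : p - r <> 0) by lra. pose proof (Rabs_pos_lt _ Hq).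
  pose proof (ln1e_bounds (p*u)). pose proof (ln1e_bounds (r*u)).
  assert (HA : Rabs ((ln (1 + exp (p * u)) - ln (1 + exp (r * u))) / (p - r)) <= (exp (p * u) + exp (r * u)) / Rabs (p - r)).
  { apply absdiv; auto. replace ((exp (p * u) + exp (r * u)) / Rabs (p - r) * Rabs (p - r)) with (exp (p * u) + exp (r * u)) by (field; lra).
    apply Rabs_le; lra. }
  pose proof (Rle_abs ((ln (1 + exp (p * u)) - ln (1 + exp (r * u))) / (p - r))) as HB.
  apply Rmult_le_compat_r with (r := Rabs (p - r)) in HA; [|lra].
  apply Rmult_le_compat_r with (r := Rabs (p - r)) in HB; [|lra].
  replace ((exp (p * u) + exp (r * u)) / Rabs (p - r) * Rabs (p - r)) with (exp (p * u) + exp (r * u)) in HA by (field; lra).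
  lra.
Qed.

Lemma Bq q u m : q < 0 -> 0 <= m -> - q * m <= 1/2 ->
  0 <= ln (1 + exp (q * (u - m))) - ln (1 + exp (q * u)) <= 2 * (- q) * m * exp (q * u).
Proof. intros Hq Hm Hqm.
  set (y := exp (q * u)). set (k := exp (- q * m)).
  assert (Ek : exp (q * (u - m)) = y * k) by (unfold y, k; rewrite <- exp_plus; f_equal; ring).
  rewrite Ek.
  assert (Hy : 0 < y) by apply exp_pos.
  assert (Hk1 : 1 <= k) by (apply exp_ge1; nra).
  assert (Hx0 : 0 <= - q * m) by nra.
  assert (Hk2 : k <= 1 + 2 * (- q * m)).
  { pose proof (exp_up (-q*m) ltac:(lra)). unfold k.
    assert (2 * (- q * m) ^ 2 <= - q * m) by nra. lra. }
  split.
  - assert (ln (1 + y) <= ln (1 + y * k)) by (apply ln_le'; nra). lra.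
  - rewrite <- ln_divR by nra.
    pose proof (ln_le_sub1 ((1 + y * k) / (1 + y)) ltac:(apply Rdiv_lt_0_compat; nra)).
    assert ((1 + y * k) / (1 + y) - 1 <= y * (k - 1)).
    { replace ((1 + y * k) / (1 + y) - 1) with (y * (k - 1) / (1 + y)) by (field; lra).
      apply Rmult_le_reg_r with (1 + y); [lra|].
      replace (y * (k - 1) / (1 + y) * (1 + y)) with (y * (k - 1)) by (field; lra). nra. }
    nra.
Qed.

Lemma LipNE p r u m : p < 0 -> r < 0 -> p <> r -> 0 <= m -> - p * m <= 1/2 -> - r * m <= 1/2 ->
  Rabs (Phi p r (u - m) - Phi p r u) * Rabs (p - r) <= 2 * m * (- p * exp (p * u) + - r * exp (r * u)).
Proof. intros Hp Hr Hpr Hm H1 H2. rewrite !Phi_ne by auto.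
  assert (Hq : p - r <> 0) by lra. pose proof (Rabs_pos_lt _ Hq).
  pose proof (Bq p u m Hp Hm H1). pose proof (Bq r u m Hr Hm H2).
  replace ((ln (1 + exp (p * (u - m))) - ln (1 + exp (r * (u - m)))) / (p - r) -
      (ln (1 + exp (p * u)) - ln (1 + exp (r * u))) / (p - r))
    with (((ln (1 + exp (p * (u - m))) - ln (1 + exp (p * u))) - (ln (1 + exp (r * (u - m))) - ln (1 + exp (r * u)))) / (p - r))
    by (field; auto).
  unfold Rdiv. rewrite Rabs_mult, Rabs_inv, Rmult_assoc, Rinv_l by lra. rewrite Rmult_1_r.
  apply Rabs_le. nra.
Qed.

Lemma div_nn a b : 0 <= a -> 0 < b -> 0 <= a / b.
Proof. intros. unfold Rdiv. apply Rmult_le_pos; [lra| left; apply Rinv_0_lt_compat; lra]. Qed.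

Lemma tailNE p r : p < 0 -> r < 0 -> p <> r -> forall eta, 0 < eta ->
  exists u, 0 < Phi p r u <= eta /\
    Rabs (Phi p r (u - Phi p r u) - Phi p r u) <= Phi p r u / 8.
Proof.
  intros Hp Hr Hpr eta He.
  set (Q := Rabs (p - r)).
  assert (HQ : 0 < Q) by (apply Rabs_pos_lt; lra).
  set (e' := Rmin eta (Rmin (1 / (2 * - p)) (1 / (2 * - r)))).
  assert (He1 : e' <= eta) by apply Rmin_l.
  assert (He2 : e' <= 1 / (2 * - p)) by (eapply Rle_trans; [apply Rmin_r| apply Rmin_l]).
  assert (He3 : e' <= 1 / (2 * - r)) by (eapply Rle_trans; [apply Rmin_r| apply Rmin_r]).
  assert (He0 : 0 < e').
  { unfold e'. repeat apply Rmin_pos; try apply Rdiv_lt_0_compat; lra. }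
  set (S := 1 / - p + 1 / - r).
  assert (HS : 0 < S) by (unfold S; assert (0 < 1 / - p) by (apply Rdiv_lt_0_compat; lra);
     assert (0 < 1 / - r) by (apply Rdiv_lt_0_compat; lra); lra).
  set (u := 32 / Q + S / (Q * e') + 1).
  assert (HQ1 : 0 < 32 / Q) by (apply Rdiv_lt_0_compat; lra).
  assert (HQ2 : 0 < S / (Q * e')) by (apply Rdiv_lt_0_compat; nra).
  assert (Hu : 0 < u) by (unfold u; lra).
  assert (HuQ : 32 <= u * Q).
  { unfold u. replace ((32 / Q + S / (Q * e') + 1) * Q) with (32 + S / e' + Q) by (field; lra).
    assert (0 < S / e') by (apply Rdiv_lt_0_compat; lra). lra. }
  assert (HuS : S <= u * Q * e').
  { unfold u. replace ((32 / Q + S / (Q * e') + 1) * Q * e') with (32 * e' + S + Q * e') by (field; lra).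
    nra. }
  exists u.
  set (m := Phi p r u).
  assert (Hm0 : 0 < m) by (apply Npos; auto).
  pose proof (Nup p r u Hpr) as Hup. fold m Q in Hup.
  pose proof (EB p u Hp Hu) as Ep. pose proof (EB r u Hr Hu) as Er.
  assert (Ep' : u * (- p * exp (p * u)) <= 1).
  { apply Rmult_le_compat_l with (r := u) in Ep; [|lra]. replace (u * (1/u)) with 1 in Ep by (field; lra). lra. }
  assert (Er' : u * (- r * exp (r * u)) <= 1).
  { apply Rmult_le_compat_l with (r := u) in Er; [|lra]. replace (u * (1/u)) with 1 in Er by (field; lra). lra. }
  assert (Ep2 : exp (p * u) * u <= 1 / - p).
  { apply Rmult_le_reg_l with (- p); [lra|]. replace (- p * (1 / - p)) with 1 by (field; lra). nra. }
  assert (Er2 : exp (r * u) * u <= 1 / - r).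
  { apply Rmult_le_reg_l with (- r); [lra|]. replace (- r * (1 / - r)) with 1 by (field; lra). nra. }
  assert (Hme : m <= e').
  { assert (m * Q * u <= S) by (unfold S; nra).
    assert (m * (u * Q) <= e' * (u * Q)) by nra.
    apply Rmult_le_reg_r with (u * Q); nra. }
  split; [lra|].
  assert (Hpm : - p * m <= 1/2).
  { apply Rmult_le_compat_l with (r := - p) in He2; [|lra].
    replace (- p * (1 / (2 * - p))) with (1/2) in He2 by (field; lra). nra. }
  assert (Hrm : - r * m <= 1/2).
  { apply Rmult_le_compat_l with (r := - r) in He3; [|lra].
    replace (- r * (1 / (2 * - r))) with (1/2) in He3 by (field; lra). nra. }
  pose proof (LipNE p r u m Hp Hr Hpr ltac:(lra) Hpm Hrm) as HL. fold Q in HL.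
  set (D := Rabs (Phi p r (u - m) - Phi p r u)) in *.
  assert (D * Q * u <= 4 * m) by nra.
  assert (D * (Q * u) <= (m / 8) * (Q * u)) by nra.
  change (D <= m / 8). apply Rmult_le_reg_r with (Q * u); nra.
Qed.

Lemma tailEQ p : p < 0 -> forall eta, 0 < eta ->
  exists u, 0 < Phi p p u <= eta /\
    Rabs (Phi p p (u - Phi p p u) - Phi p p u) <= Phi p p u / 8.
Proof.
  intros Hp eta He. set (a := - p).
  assert (Ha : 0 < a) by (unfold a; lra).
  set (e' := Rmin eta (1 / (2 * a))).
  assert (He1 : e' <= eta) by apply Rmin_l.
  assert (He2 : e' <= 1 / (2 * a)) by apply Rmin_r.
  assert (He0 : 0 < e') by (unfold e'; apply Rmin_pos; [lra| apply Rdiv_lt_0_compat; lra]).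
  set (u := 80 / a + 4 / (a ^ 2 * e') + 1).
  assert (H1 : 0 < 80 / a) by (apply Rdiv_lt_0_compat; lra).
  assert (H2 : 0 < 4 / (a ^ 2 * e')) by (apply Rdiv_lt_0_compat; [lra| apply Rmult_lt_0_compat; [apply pow_lt|]; lra]).
  assert (Hu : 0 < u) by (unfold u; lra).
  assert (Hua : 80 <= u * a).
  { unfold u. replace ((80 / a + 4 / (a ^ 2 * e') + 1) * a) with (80 + 4 / (a * e') + a) by (field; lra).
    assert (0 < 4 / (a * e')) by (apply Rdiv_lt_0_compat; nra). lra. }
  assert (Hue : 4 <= u * a ^ 2 * e').
  { unfold u. replace ((80 / a + 4 / (a ^ 2 * e') + 1) * a ^ 2 * e') with (80 * a * e' + 4 + a^2 * e') by (field; lra).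
    nra. }
  exists u.
  set (y := exp (p * u)).
  assert (Hy : 0 < y) by apply exp_pos.
  assert (Hp0 : p <> 0) by lra.
  assert (Em : Phi p p u = u * y / (1 + y)) by (rewrite Phi_eq; auto).
  set (m := Phi p p u) in *.
  pose proof (EB p u Hp Hu) as Ey. fold y in Ey. fold a in Ey.
  assert (Ey' : a * y * u <= 1).
  { apply Rmult_le_compat_r with (r := u) in Ey; [|lra]. replace (1/u*u) with 1 in Ey by (field; lra). lra. }
  pose proof (EB2 p u Hp Hu) as Ey2. fold y in Ey2.
  assert (Ey2' : a ^ 2 * u ^ 2 * y <= 4) by (replace (a^2*u^2) with ((p*u)^2) by (unfold a; ring); lra).
  assert (Hm0 : 0 < m) by (rewrite Em; apply Rdiv_lt_0_compat; nra).
  assert (Hm1 : m <= u * y).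
  { rewrite Em. apply Rmult_le_reg_r with (1 + y); [lra|].
    replace (u * y / (1 + y) * (1 + y)) with (u * y) by (field; lra). nra. }
  assert (Hme : m <= e').
  { assert (u * y * (u * a ^ 2) <= e' * (u * a ^ 2)) by nra.
    assert (u * y <= e') by (apply Rmult_le_reg_r with (u * a ^ 2); nra). lra. }
  split; [lra|].
  assert (Ham : a * m <= 1/2).
  { apply Rmult_le_compat_l with (r := a) in He2; [|lra].
    replace (a * (1 / (2 * a))) with (1/2) in He2 by (field; lra). nra. }
  set (k := exp (a * m)).
  assert (Hk1 : 1 <= k) by (apply exp_ge1; nra).
  assert (Hk2 : k <= 1 + 2 * (a * m)).
  { pose proof (exp_up (a*m) ltac:(lra)). unfold k.
    assert (0 <= a * m) by (apply Rmult_le_pos; lra). assert (2 * (a * m) ^ 2 <= a * m) by nra. lra. }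
  assert (Ek : exp (p * (u - m)) = y * k) by (unfold y, k, a; rewrite <- exp_plus; f_equal; ring).
  rewrite Phi_eq by auto. rewrite Ek.
  assert (T1 : 0 <= y * (k - 1) / ((1 + y * k) * (1 + y)) <= y * (k - 1)).
  { split. apply div_nn; nra.
    apply Rmult_le_reg_r with ((1 + y * k) * (1 + y)); [nra|].
    replace (y * (k - 1) / ((1 + y * k) * (1 + y)) * ((1 + y * k) * (1 + y))) with (y * (k - 1)) by (field; nra).
    assert (0 <= y * (k - 1)) by nra. nra. }
  assert (T2 : 0 <= y * k / (1 + y * k) <= y * k).
  { split. apply div_nn; nra.
    apply Rmult_le_reg_r with (1 + y * k); [nra|].
    replace (y * k / (1 + y * k) * (1 + y * k)) with (y * k) by (field; nra). nra. }
  set (X := y * (k - 1) / ((1 + y * k) * (1 + y))) in *.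
  set (Z := y * k / (1 + y * k)) in *.
  assert (Eq : forall mm, mm = u * y / (1 + y) -> (u - m) * (y * k) / (1 + y * k) - mm = u * X - m * Z).
  { intros mm Hmm. rewrite Hmm. unfold X, Z. field. nra. }
  rewrite (Eq m Em).
  assert (B : u * X + m * Z <= m / 8).
  { assert (u * X <= u * y * (2 * a * m)) by nra.
    assert (m * Z <= m * (2 * y)) by nra.
    assert (y * (2 * a * u + 2) * (u * a) <= 1/8 * (u * a)).
    { assert (y * u * a * u * a <= 4) by nra. nra. }
    assert (y * (2 * a * u + 2) <= 1/8) by (apply Rmult_le_reg_r with (u * a); nra).
    nra. }
  apply Rabs_le. split; nra.
Qed.
Lemma caseB p r : p < 0 -> r < 0 -> Ident (Phi p r) -> False.
Proof. intros Hp Hr HI.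
  destruct (Req_EM_T p r) as [e|n].
  - subst r. assert (Hp0 : p <> 0) by lra.
    apply (caseB_abs (Phi p p) (Rabs p) (1 / (2 * Rabs p))).
    + apply Rabs_pos_lt; auto.
    + pose proof (Rabs_pos_lt _ Hp0). apply Rdiv_lt_0_compat; lra.
    + apply locEQ; auto.
    + apply tailEQ; auto.
    + auto.
  - apply (caseB_abs (Phi p r) ((p^2 + r^2) / (2 * Rabs (p - r)) + 1) (1 / (Rabs p + Rabs r + 1))).
    + assert (0 <= (p^2 + r^2) / (2 * Rabs (p - r))).
      { unfold Rdiv. apply Rmult_le_pos. nra. left. apply Rinv_0_lt_compat.
        pose proof (Rabs_pos_lt (p - r) ltac:(lra)). lra. }
      lra.
    + pose proof (Rabs_pos p). pose proof (Rabs_pos r). apply Rdiv_lt_0_compat; lra.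
    + apply locNE; auto.
    + apply tailNE; auto.
    + auto.
Qed.

Theorem mainTheorem13 (p r : R) :
  stable (Gini p r) <-> p * r * (p + r) = 0.
Proof.
  split.
  - intro Hs. apply stable_iff in Hs.
    destruct (Req_EM_T (p * r * (p + r)) 0) as [e|n]; auto. exfalso.
    assert (Hp : p <> 0) by (intro; apply n; subst; ring).
    assert (Hr : r <> 0) by (intro; apply n; subst; ring).
    assert (Hpr : p + r <> 0) by (intro E; apply n; rewrite E; ring).
    assert (Hs' : Ident (Phi (-p) (-r))).
    { apply Ident_ext with (fun v => - Phi p r (- v)). intro; apply Phi_refl.
      apply Ident_refl; auto. }
    destruct (Rlt_or_le 0 p) as [p1|p1]; destruct (Rlt_or_le 0 r) as [r1|r1].
    + apply (caseB (-p) (-r)); auto; lra.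
    + apply (caseA p r); auto; lra.
    + apply (caseA (-p) (-r)); auto; lra.
    + apply (caseB p r); auto; lra.
  - intro H. apply stable_iff. apply if_dir; auto.
Qed.
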